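(* Let $\mathcal{X}$ be a subcategory of $\mathcal{C}$ closed under extensions and CoCones, and let $\mathcal{W}$ be an $\mathcal{X}$-injective cogenerator for $\mathcal{X}$. For any $\mathbb{E}$-triangle $A\xrightarrow{x}B\xrightarrow{y}C\dashrightarrow$ in $\mathcal{C}$, if two of $A,B,C$ lie in $\widehat{\mathcal{X}}$, then so does the third.
   Context: $\mathcal{C}=(\mathcal{C},\mathbb{E},\mathfrak{s})$ is an extriangulated category (in the sense of Nakaoka–Palu) with enough projectives and enough injectives; a conflation realizing $\delta\in\mathbb{E}(C,A)$ is written as an $\mathbb{E}$-triangle $A\to B\to C\dashrightarrow$. All subcategories are full, additive, closed under isomorphisms and direct summands. Higher extensions: $\mathbb{E}^1=\mathbb{E}$, $\mathbb{E}^{i+1}(X,Y)=\mathbb{E}(X,\Sigma^iY)\cong\mathbb{E}(\Omega^iX,Y)$. $\mathcal{X}$ is extension-closed if for every $\mathbb{E}$-triangle $A\to B\to C\dashrightarrow$ with $A,C\in\mathcal{X}$ one has $B\in\mathcal{X}$; closed under CoCones if for every such $\mathbb{E}$-triangle with $B,C\in\mathcal{X}$ one has $A\in\mathcal{X}$. $\mathcal{W}$ is an $\mathcal{X}$-injective cogenerator for $\mathcal{X}$ if $\mathcal{W}\subseteq\mathcal{X}$, for each $X\in\mathcal{X}$ there is an $\mathbb{E}$-triangle $X\to W\to X'\dashrightarrow$ with $W\in\mathcal{W}$, $X'\in\mathcal{X}$, and $\mathbb{E}^i(X,W)=0$ for all $X\in\mathcal{X}$, $W\in\mathcal{W}$,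 $i\ge1$. For $n\ge0$, $\widehat{\mathcal{X}}_n$ is the class of objects $C$ for which there exist $\mathbb{E}$-triangles $K_{i+1}\to X_i\to K_i\dashrightarrow$ ($0\le i\le n-1$) with $K_0=C$, all $X_i\in\mathcal{X}$ and $K_n\in\mathcal{X}$; $\widehat{\mathcal{X}}=\bigcup_n\widehat{\mathcal{X}}_n$. *)

(* Defs.v *)
From HB Require Import structures.
From mathcomp Require Import all_boot all_algebra.
Set Implicit Arguments. Unset Strict Implicit. Unset Printing Implicit Defensive.
Import GRing.Theory.
Local Open Scope ring_scope.

Record CatData := {
  Obj : Type;
  Hom : Obj -> Obj -> zmodType;
  comp : forall A B C : Obj, Hom B C -> Hom A B -> Hom A C;
  idm : forall A : Obj, Hom A A
}.
Arguments comp {c A B C}.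
Arguments idm {c A}.
Notation "g \oc f" := (comp g f) (at level 40, left associativity).

Section Cat.
Variable C : CatData.
Implicit Types A B D : Obj C.

Definition is_iso A B (f : Hom A B) : Prop :=
  exists g : Hom B A, g \oc f = idm /\ f \oc g = idm.

Definition isomorphic A B : Prop := exists f : Hom A B, is_iso f.

Definition is_zero_obj (Z : Obj C) : Prop := (idm : Hom Z Z) = 0.

Definition is_biprod A1 A2 (S : Obj C) (i1 : Hom A1 S) (i2 : Hom A2 S)
  (p1 : Hom S A1) (p2 : Hom S A2) : Prop :=
  [/\ p1 \oc i1 = idm, p2 \oc i2 = idm, p1 \oc i2 = 0, p2 \oc i1 = 0
    & i1 \oc p1 + i2 \oc p2 = idm].

Record IsAdditive : Prop := {
  comp_assoc : forall A B D (E : Obj C) (h : Hom D E) (g : Hom B D) (f : Hom A B),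
      h \oc (g \oc f) = (h \oc g) \oc f;
  comp_idl : forall A B (f : Hom A B), idm \oc f = f;
  comp_idr : forall A B (f : Hom A B), f \oc idm = f;
  comp_addl : forall A B D (g g' : Hom B D) (f : Hom A B),
      (g + g') \oc f = g \oc f + g' \oc f;
  comp_addr : forall A B D (g : Hom B D) (f f' : Hom A B),
      g \oc (f + f') = g \oc f + g \oc f';
  zero_exists : exists Z : Obj C, is_zero_obj Z;
  biprod_exists : forall A1 A2, exists (S : Obj C) (i1 : Hom A1 S) (i2 : Hom A2 S)
      (p1 : Hom S A1) (p2 : Hom S A2), is_biprod i1 i2 p1 p2
}.

Definition is_subcat (X : Obj C -> Prop) : Prop :=
  [/\ (forall Z, is_zero_obj Z -> X Z),
      (forall A1 A2 S (i1 : Hom A1 S) (i2 : Hom A2 S) p1 p2,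
          is_biprod i1 i2 p1 p2 -> X A1 -> X A2 -> X S),
      (forall A B, isomorphic A B -> X A -> X B)
    & (forall A1 A2 S (i1 : Hom A1 S) (i2 : Hom A2 S) p1 p2,
          is_biprod i1 i2 p1 p2 -> X S -> X A1)].
End Cat.

(* Extriangulated structure: E(C,A) = Ext C A, a_* = pushf, c^* = pullb,
   and the realization s given as the relation
   real delta x y  <->  s(delta) = [A -x-> B -y-> C].                    *)
Record ExtData (C : CatData) := {
  Ext : Obj C -> Obj C -> zmodType;
  pushf : forall (A A' Z : Obj C), Hom A A' -> Ext Z A -> Ext Z A';
  pullb : forall (A Z Z' : Obj C), Hom Z' Z -> Ext Z A -> Ext Z' A;
  real : forall (A B Z : Obj C), Ext Z A -> Hom A B -> Hom B Z -> Prop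
}.
Arguments Ext {C}.
Arguments pushf {C e A A' Z}.
Arguments pullb {C e A Z Z'}.
Arguments real {C e A B Z}.

Section Extri.
Variable C : CatData.
Variable E : ExtData C.
Implicit Types A B D F : Obj C.

Local Notation Ex := (Ext E).
Local Notation "a |_* d" := (@pushf C E _ _ _ a d) (at level 30).
Local Notation "c |^* d" := (@pullb C E _ _ _ c d) (at level 30).
Local Notation rl := (@real C E _ _ _).

Record IsExtriangulated : Prop := {
  pushf_id : forall A Z (d : Ex Z A), idm |_* d = d;
  pushf_comp : forall A A' A'' Z (a : Hom A A') (a' : Hom A' A'') (d : Ex Z A),
      (a' \oc a) |_* d = a' |_* (a |_* d);
  pullb_id : forall A Z (d : Ex Z A), idm |^* d = d;
  pullb_comp : forall A Z Z' Z'' (c : Hom Z' Z) (c' : Hom Z'' Z') (d : Ex Z A),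
      (c \oc c') |^* d = c' |^* (c |^* d);
  push_pull : forall A A' Z Z' (a : Hom A A') (c : Hom Z' Z) (d : Ex Z A),
      a |_* (c |^* d) = c |^* (a |_* d);
  pushf_addE : forall A A' Z (a : Hom A A') (d d' : Ex Z A),
      a |_* (d + d') = a |_* d + a |_* d';
  pushf_addH : forall A A' Z (a a' : Hom A A') (d : Ex Z A),
      (a + a') |_* d = a |_* d + a' |_* d;
  pullb_addE : forall A Z Z' (c : Hom Z' Z) (d d' : Ex Z A),
      c |^* (d + d') = c |^* d + c |^* d';
  pullb_addH : forall A Z Z' (c c' : Hom Z' Z) (d : Ex Z A),
      (c + c') |^* d = c |^* d + c' |^* d;
  (* s is a realization: s(delta) is a (nonempty) equivalence class *)
  real_exists : forall A Z (d : Ex Z A),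
      exists (B : Obj C) (x : Hom A B) (y : Hom B Z), rl d x y;
  real_unique : forall A B B' Z (d : Ex Z A) (x : Hom A B) (y : Hom B Z)
      (x' : Hom A B') (y' : Hom B' Z), rl d x y -> rl d x' y' ->
      exists b : Hom B B', [/\ is_iso b, b \oc x = x' & y' \oc b = y];
  real_iso : forall A B B' Z (d : Ex Z A) (x : Hom A B) (y : Hom B Z)
      (b : Hom B B') (b' : Hom B' B), rl d x y ->
      b' \oc b = idm -> b \oc b' = idm -> rl d (b \oc x) (y \oc b');
  real_morph : forall A B Z A' B' Z' (d : Ex Z A) (x : Hom A B) (y : Hom B Z)
      (d' : Ex Z' A') (x' : Hom A' B') (y' : Hom B' Z') (a : Hom A A') (c : Hom Z Z'),
      rl d x y -> rl d' x' y' -> a |_* d = c |^* d' ->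
      exists b : Hom B B', b \oc x = x' \oc a /\ y' \oc b = c \oc y;
  real_zero : forall A Z S (i1 : Hom A S) (i2 : Hom Z S) p1 p2,
      is_biprod i1 i2 p1 p2 -> rl (0 : Ex Z A) i1 p2;
  real_sum : forall A B Z A' B' Z' (d : Ex Z A) (x : Hom A B) (y : Hom B Z)
      (d' : Ex Z' A') (x' : Hom A' B') (y' : Hom B' Z')
      SA (iA : Hom A SA) (iA' : Hom A' SA) pA pA'
      SB (iB : Hom B SB) (iB' : Hom B' SB) pB pB'
      SZ (iZ : Hom Z SZ) (iZ' : Hom Z' SZ) pZ pZ',
      rl d x y -> rl d' x' y' ->
      is_biprod iA iA' pA pA' -> is_biprod iB iB' pB pB' -> is_biprod iZ iZ' pZ pZ' ->
      rl (iA |_* (pZ |^* d) + iA' |_* (pZ' |^* d'))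
         (iB \oc x \oc pA + iB' \oc x' \oc pA')
         (iZ \oc y \oc pB + iZ' \oc y' \oc pB');
  et3 : forall A B Z A' B' Z' (d : Ex Z A) (x : Hom A B) (y : Hom B Z)
      (d' : Ex Z' A') (x' : Hom A' B') (y' : Hom B' Z') (a : Hom A A') (b : Hom B B'),
      rl d x y -> rl d' x' y' -> b \oc x = x' \oc a ->
      exists c : Hom Z Z', a |_* d = c |^* d' /\ c \oc y = y' \oc b;
  et3op : forall A B Z A' B' Z' (d : Ex Z A) (x : Hom A B) (y : Hom B Z)
      (d' : Ex Z' A') (x' : Hom A' B') (y' : Hom B' Z') (b : Hom B B') (c : Hom Z Z'),
      rl d x y -> rl d' x' y' -> y' \oc b = c \oc y ->
      exists a : Hom A A', a |_* d = c |^* d' /\ b \oc x = x' \oc a;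
  et4 : forall A B D Z F (d : Ex D A) (f : Hom A B) (f' : Hom B D)
      (d' : Ex F B) (g : Hom B Z) (g' : Hom Z F),
      rl d f f' -> rl d' g g' ->
      exists (G : Obj C) (h' : Hom Z G) (d'' : Ex G A) (dd : Hom D G) (e : Hom G F),
      [/\ rl d'' (g \oc f) h', rl (f' |_* d') dd e,
          dd |^* d'' = d, f |_* d'' = e |^* d' &
          h' \oc g = dd \oc f' /\ e \oc h' = g'];
  et4op : forall A B D Z F (d : Ex B D) (f' : Hom D A) (f : Hom A B)
      (d' : Ex Z F) (g' : Hom F B) (g : Hom B Z),
      rl d f' f -> rl d' g' g ->
      exists (G : Obj C) (dd : Hom D G) (e : Hom G F) (h' : Hom G A) (d'' : Ex Z G),
      [/\ rl d'' h' (g \oc f), rl (g' |^* d) dd e,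
          d' = e |_* d'', dd |_* d = g |^* d'' &
          f' = h' \oc dd /\ f \oc h' = g' \oc e]
}.

Definition projective (P : Obj C) : Prop :=
  forall A B Z (d : Ex Z A) (x : Hom A B) (y : Hom B Z), rl d x y ->
  forall f : Hom P Z, exists g : Hom P B, y \oc g = f.

Definition injective (I : Obj C) : Prop :=
  forall A B Z (d : Ex Z A) (x : Hom A B) (y : Hom B Z), rl d x y ->
  forall f : Hom A I, exists g : Hom B I, g \oc x = f.

Definition enough_projectives : Prop :=
  forall Z, exists A P (d : Ex Z A) (x : Hom A P) (y : Hom P Z), rl d x y /\ projective P.

Definition enough_injectives : Prop :=
  forall A, exists I Z (d : Ex Z A) (x : Hom A I) (y : Hom I Z), rl d x y /\ injective I.

(* cosyz n Y Z : Z is an n-th cosyzygy Sigma^n Y, obtained by iterating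
   E-triangles  Y' -> I -> Sigma Y' --> with I injective. *)
Inductive cosyz : nat -> Obj C -> Obj C -> Prop :=
| cosyz0 Y : cosyz 0 Y Y
| cosyzS n Y Z I Z' (d : Ex Z' Z) (x : Hom Z I) (y : Hom I Z') :
    cosyz n Y Z -> rl d x y -> injective I -> cosyz n.+1 Y Z'.

(* E^i(X,Y) = 0 for i >= 1, where E^i(X,Y) = E(X, Sigma^(i-1) Y) *)
Definition higher_ext_vanish (i : nat) (X Y : Obj C) : Prop :=
  forall Z, cosyz i.-1 Y Z -> forall d : Ex X Z, d = 0.

Definition extension_closed (X : Obj C -> Prop) : Prop :=
  forall A B Z (d : Ex Z A) (x : Hom A B) (y : Hom B Z), rl d x y ->
  X A -> X Z -> X B.

Definition cocone_closed (X : Obj C -> Prop) : Prop :=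
  forall A B Z (d : Ex Z A) (x : Hom A B) (y : Hom B Z), rl d x y ->
  X B -> X Z -> X A.

Definition inj_cogenerator (X W : Obj C -> Prop) : Prop :=
  [/\ (forall A, W A -> X A),
      (forall X0, X X0 -> exists W0 X' (d : Ex X' X0) (x : Hom X0 W0) (y : Hom W0 X'),
           [/\ rl d x y, W W0 & X X'])
    & (forall X0 W0 i, X X0 -> W W0 -> (1 <= i)%N -> higher_ext_vanish i X0 W0)].

Inductive XhatN (X : Obj C -> Prop) : nat -> Obj C -> Prop :=
| XhatN0 A : X A -> XhatN X 0 A
| XhatNS n K X0 Z (d : Ex Z K) (x : Hom K X0) (y : Hom X0 Z) :
    rl d x y -> X X0 -> XhatN X n K -> XhatN X n.+1 Z.

Definition Xhat (X : Obj C -> Prop) (A : Obj C) : Prop := exists n, XhatN X n A.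

End Extri.

(* Main.v *)
Require Import Defs.
From mathcomp Require Import ssreflect ssrfun ssrbool eqtype ssrnat ssralg.
Set Implicit Arguments. Unset Strict Implicit. Unset Printing Implicit Defensive.
Import GRing.Theory.
Local Open Scope ring_scope.

Section Basics.
Variable C : CatData.
Variable E : ExtData C.
Variable HC : IsAdditive C.
Variable HE : IsExtriangulated E.

Local Notation "a |_* d" := (@pushf C E _ _ _ a d) (at level 30).
Local Notation "c |^* d" := (@pullb C E _ _ _ c d) (at level 30).

Lemma comp0r (A B D : Obj C) (g : Hom B D) : g \oc (0 : Hom A B) = 0.
Proof.
have h := comp_addr HC g (0 : Hom A B) 0; rewrite addr0 in h.
by apply: (addrI (g \oc (0 : Hom A B))); rewrite -h addr0.
Qed.

Lemma comp0l (A B D : Obj C) (f : Hom A B) : (0 : Hom B D) \oc f = 0.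
Proof.
have h := comp_addl HC (0 : Hom B D) 0 f; rewrite addr0 in h.
by apply: (addrI ((0 : Hom B D) \oc f)); rewrite -h addr0.
Qed.

Lemma pushf0E (A A' Z : Obj C) (a : Hom A A') : a |_* (0 : Ext E Z A) = 0.
Proof.
have h := pushf_addE HE a (0 : Ext E Z A) 0; rewrite addr0 in h.
by apply: (addrI (a |_* (0 : Ext E Z A))); rewrite -h addr0.
Qed.

Lemma pushf0H (A A' Z : Obj C) (d : Ext E Z A) : (0 : Hom A A') |_* d = 0.
Proof.
have h := pushf_addH HE (0 : Hom A A') 0 d; rewrite addr0 in h.
by apply: (addrI ((0 : Hom A A') |_* d)); rewrite -h addr0.
Qed.

Lemma pullb0E (A Z Z' : Obj C) (c : Hom Z' Z) : c |^* (0 : Ext E Z A) = 0.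
Proof.
have h := pullb_addE HE c (0 : Ext E Z A) 0; rewrite addr0 in h.
by apply: (addrI (c |^* (0 : Ext E Z A))); rewrite -h addr0.
Qed.

Lemma pullb0H (A Z Z' : Obj C) (d : Ext E Z A) : (0 : Hom Z' Z) |^* d = 0.
Proof.
have h := pullb_addH HE (0 : Hom Z' Z) 0 d; rewrite addr0 in h.
by apply: (addrI ((0 : Hom Z' Z) |^* d)); rewrite -h addr0.
Qed.


Ltac assoc := rewrite ?(comp_assoc HC).

Lemma cAr (A B D F : Obj C) (h : Hom D F) (g : Hom B D) (f : Hom A B) k :
  g \oc f = k -> h \oc g \oc f = h \oc k.
Proof. by move=> <-; rewrite (comp_assoc HC). Qed.

Lemma zero_from (Z0 B : Obj C) (f : Hom Z0 B) : is_zero_obj Z0 -> f = 0.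
Proof. by move=> hz; rewrite -(comp_idr HC f) hz comp0r. Qed.

Lemma zero_to (Z0 B : Obj C) (f : Hom B Z0) : is_zero_obj Z0 -> f = 0.
Proof. by move=> hz; rewrite -(comp_idl HC f) hz comp0l. Qed.

Lemma biprod_sym (A1 A2 S : Obj C) (i1 : Hom A1 S) (i2 : Hom A2 S) p1 p2 :
  is_biprod i1 i2 p1 p2 -> is_biprod i2 i1 p2 p1.
Proof. by case=> a b c d e; split => //; rewrite addrC. Qed.

Lemma triv_tri1 (A Z0 : Obj C) : is_zero_obj Z0 ->
  real (0 : Ext E Z0 A) idm 0.
Proof.
move=> hz; apply: (real_zero HE (i2 := 0) (p1 := idm)).
split; rewrite ?comp_idl ?comp_idr ?comp0l ?comp0r ?addr0 //.
all: by rewrite hz.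
Qed.

Lemma triv_tri2 (W Z0 : Obj C) : is_zero_obj Z0 ->
  real (0 : Ext E W Z0) 0 idm.
Proof.
move=> hz; apply: (real_zero HE (i2 := idm) (p1 := 0)).
split; rewrite ?comp_idl ?comp_idr ?comp0l ?comp0r ?add0r //.
all: by rewrite hz.
Qed.

Lemma yx0 (A B Z : Obj C) (d : Ext E Z A) (x : Hom A B) (y : Hom B Z) : real d x y -> y \oc x = 0.
Proof.
move=> hd; have [Z0 hz] := zero_exists HC.
have [a [_ ->]] := et3op HE (b := y) (c := idm) hd (triv_tri2 Z hz) erefl.
by rewrite comp0l.
Qed.

Lemma exactE1 (A B Z W : Obj C) (d : Ext E Z A) (x : Hom A B) (y : Hom B Z) (f : Hom B W) :
  real d x y -> f \oc x = 0 -> exists g : Hom Z W, g \oc y = f.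
Proof.
move=> hd hf; have [Z0 hz] := zero_exists HC.
have hc0 : f \oc x = 0 \oc (0 : Hom A Z0) by rewrite hf comp0l.
have [c [_ hc]] := et3 HE (a := 0) (b := f) hd (triv_tri2 W hz) hc0.
by exists c; rewrite hc comp_idl.
Qed.

Lemma exactE2 (A B Z W : Obj C) (d : Ext E Z A) (x : Hom A B) (y : Hom B Z) (f : Hom W B) :
  real d x y -> y \oc f = 0 -> exists h : Hom W A, x \oc h = f.
Proof.
move=> hd hf; have [Z0 hz] := zero_exists HC.
have hc0 : y \oc f = (0 : Hom Z0 Z) \oc 0 by rewrite hf comp0l.
have [a [_ ha]] := et3op HE (b := f) (c := 0) (triv_tri1 W hz) hd hc0.
by exists a; rewrite -ha comp_idr.
Qed.


Lemma compNl (A B D : Obj C) (g : Hom B D) (f : Hom A B) : (- g) \oc f = - (g \oc f).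
Proof.
apply: (addIr (g \oc f)); rewrite -(comp_addl HC) !addNr.
by rewrite comp0l.
Qed.

Lemma compNr (A B D : Obj C) (g : Hom B D) (f : Hom A B) : g \oc (- f) = - (g \oc f).
Proof.
apply: (addIr (g \oc f)); rewrite -(comp_addr HC) !addNr.
by rewrite comp0r.
Qed.

Lemma compBl (A B D : Obj C) (g g' : Hom B D) (f : Hom A B) :
  (g - g') \oc f = g \oc f - g' \oc f.
Proof. by rewrite (comp_addl HC) compNl. Qed.

Lemma compBr (A B D : Obj C) (g : Hom B D) (f f' : Hom A B) :
  g \oc (f - f') = g \oc f - g \oc f'.
Proof. by rewrite (comp_addr HC) compNr. Qed.

Lemma unipotent (A B Z : Obj C) (d : Ext E Z A) (x : Hom A B) (y : Hom B Z) (u : Hom B B) :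
  real d x y -> u \oc x = x -> y \oc u = y -> is_iso u.
Proof.
move=> hd hux hyu.
pose n := u - idm.
have hu : u = n + idm by rewrite /n subrK.
clearbody n; subst u.
have hnx : n \oc x = 0.
  have h := hux; rewrite (comp_addl HC) (comp_idl HC) in h.
  by apply: (addIr x); rewrite add0r h.
have hyn : y \oc n = 0.
  have h := hyu; rewrite (comp_addr HC) (comp_idr HC) in h.
  by apply: (addIr y); rewrite add0r h.
have [g hg] := exactE1 hd hnx.
have [h hh] := exactE2 hd hyn.
have hnn : n \oc n = 0.
  rewrite -{1}hg -hh (comp_assoc HC) -(comp_assoc HC g) (yx0 hd).
  by rewrite comp0r comp0l.
exists (idm - n).
split.
- rewrite compBl !(comp_addr HC) hnn !(comp_idl HC) (comp_idr HC).
  by rewrite add0r addrC addKr.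
- rewrite compBr !(comp_addl HC) hnn !(comp_idl HC) (comp_idr HC).
  by rewrite add0r addrC addKr.
Qed.

Lemma iso_lr (A B : Obj C) (b : Hom A B) (l : Hom B A) (r : Hom B A) :
  l \oc b = idm -> b \oc r = idm -> is_iso b.
Proof.
move=> hl hr; exists l; split => //.
have -> : l = r by rewrite -(comp_idr HC l) -hr (comp_assoc HC) hl (comp_idl HC).
exact: hr.
Qed.


Ltac nrm := rewrite ?(comp_assoc HC).
Ltac rw H := nrm; first [rewrite H | rewrite (cAr _ H)]; nrm.

Lemma pushf_pullb_iso (A A' Z Z' : Obj C) (a : Hom A A') (a' : Hom A' A) (c : Hom Z Z') (c' : Hom Z' Z)
  (d : Ext E Z A) (d' : Ext E Z' A') :
  a' \oc a = idm -> c \oc c' = idm -> a |_* d = c |^* d' -> a' |_* d' = c' |^* d.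
Proof.
move=> ha hc h.
rewrite -[d](pushf_id HE) -ha (pushf_comp HE) h (push_pull HE) -(pullb_comp HE) hc.
by rewrite (pullb_id HE).
Qed.

Lemma five (A B Z A' B' Z' : Obj C) (d : Ext E Z A) (x : Hom A B) (y : Hom B Z)
  (d' : Ext E Z' A') (x' : Hom A' B') (y' : Hom B' Z')
  (a : Hom A A') (b : Hom B B') (c : Hom Z Z') :
  real d x y -> real d' x' y' -> is_iso a -> is_iso c -> a |_* d = c |^* d' ->
  b \oc x = x' \oc a -> y' \oc b = c \oc y -> is_iso b.
Proof.
move=> hd hd' [a' [ha1 ha2]] [c' [hc1 hc2]] hrel hbx hyb.
have hrel' := pushf_pullb_iso ha1 hc2 hrel.
have [b2 [hb2x hyb2]] := real_morph HE hd' hd hrel'.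
have hu : is_iso (b2 \oc b).
  apply: (unipotent hd).
  - by rw hbx; rw hb2x; rw ha1; rewrite (comp_idr HC).
  - by rw hyb2; rw hyb; rw hc1; rewrite (comp_idl HC).
have hv : is_iso (b \oc b2).
  apply: (unipotent hd').
  - by rw hb2x; rw hbx; rw ha2; rewrite (comp_idr HC).
  - by rw hyb; rw hyb2; rw hc2; rewrite (comp_idl HC).
case: hu => iu [hiu1 hiu2]; case: hv => iv [hiv1 hiv2].
apply: (iso_lr (l := iu \oc b2) (r := b2 \oc iv)).
- by rewrite -(comp_assoc HC).
- by rewrite (comp_assoc HC).
Qed.


Lemma iso_id (A : Obj C) : is_iso (idm : Hom A A).
Proof. by exists idm; rewrite (comp_idl HC). Qed.

Lemma iso3 (A B Z Z' : Obj C) (d : Ext E Z A) (x : Hom A B) (y : Hom B Z)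
  (psi : Hom Z Z') (phi : Hom Z' Z) :
  real d x y -> phi \oc psi = idm -> psi \oc phi = idm -> real (phi |^* d) x (psi \oc y).
Proof.
move=> hd h1 h2.
have [B' [x' [y' h']]] := real_exists HE (phi |^* d).
have hrel : idm |_* d = psi |^* (phi |^* d).
  by rewrite (pushf_id HE) -(pullb_comp HE) h1 (pullb_id HE).
have [b [hbx hyb]] := real_morph HE hd h' hrel.
have [bi [hb1 hb2]] : is_iso b.
  by apply: (five hd h' (iso_id A) _ hrel hbx hyb); exists phi.
have := real_iso HE h' hb2 hb1.
rewrite (comp_idr HC) in hbx.
by rewrite -hbx hyb (comp_assoc HC) hb1 (comp_idl HC).
Qed.

Lemma iso1 (A A' B Z : Obj C) (d : Ext E Z A) (x : Hom A B) (y : Hom B Z)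
  (a : Hom A A') (a' : Hom A' A) :
  real d x y -> a' \oc a = idm -> a \oc a' = idm -> real (a |_* d) (x \oc a') y.
Proof.
move=> hd h1 h2.
have [B' [x' [y' h']]] := real_exists HE (a |_* d).
have hrel : a |_* d = idm |^* (a |_* d) by rewrite (pullb_id HE).
have [b [hbx hyb]] := real_morph HE hd h' hrel.
have [bi [hb1 hb2]] : is_iso b.
  by apply: (five hd h' _ (iso_id Z) hrel hbx hyb); exists a'.
have := real_iso HE h' hb2 hb1.
rewrite (comp_idl HC) in hyb.
have -> : x' = b \oc x \oc a' by rewrite hbx -(comp_assoc HC) h2 (comp_idr HC).
by rewrite hyb !(comp_assoc HC) hb1 (comp_idl HC).
Qed.

Lemma split_biprod (A B Z : Obj C) (x : Hom A B) (y : Hom B Z) :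
  real (0 : Ext E Z A) x y -> exists (r : Hom B A) (s : Hom Z B), is_biprod x s r y.
Proof.
move=> hd.
have [S [i1 [i2 [p1 [p2 hb]]]]] := biprod_exists HC A Z.
have h0 := real_zero HE hb.
have [phi [[psi [hp1 hp2]] e1 e2]] := real_unique HE h0 hd.
case: hb => b1 b2 b3 b4 b5.
exists (p1 \oc psi), (phi \oc i2); split.
- by rewrite -e1; rw hp1; rewrite (comp_idr HC).
- by rw e2.
- by rw hp1; rewrite (comp_idr HC).
- by rewrite -e1; rw e2.
- rewrite -e1 (comp_assoc HC) -(comp_assoc HC phi i1).
  have -> : y = p2 \oc psi by rewrite -e2 -(comp_assoc HC) hp2 (comp_idr HC).
  rewrite (comp_assoc HC (phi \oc i2)) -(comp_assoc HC phi i2 p2).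
  rewrite -(comp_addl HC) -(comp_addr HC) b5 (comp_idr HC).
  exact: hp2.
Qed.


Lemma push_infl_zero (A B Z : Obj C) (d : Ext E Z A) (x : Hom A B) (y : Hom B Z) :
  real d x y -> x |_* d = 0.
Proof.
move=> hd.
have [S [i1 [i2 [p1 [p2 hb]]]]] := biprod_exists HC B Z.
have h0 := real_zero HE hb.
case: (hb) => b1 b2 b3 b4 b5.
have hc : p2 \oc (i1 + i2 \oc y) = idm \oc y.
  by rewrite (comp_addr HC) b4 add0r (comp_assoc HC) b2.
have [a [ha hax]] := et3op HE hd h0 hc.
have -> : x = a.
  have := f_equal (fun f => p1 \oc f) hax => /=.
  rewrite !(comp_assoc HC) b1 (comp_idl HC) (comp_addr HC) b1 (comp_assoc HC) b3.
  by rewrite comp0l addr0 (comp_idl HC).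
by rewrite ha pullb0E.
Qed.

Lemma inj_split (I B Z : Obj C) (d : Ext E Z I) (x : Hom I B) (y : Hom B Z) :
  real d x y -> Defs.injective E I -> d = 0.
Proof.
move=> hd hI.
have [r hr] := hI _ _ _ _ _ _ hd idm.
by rewrite -[d](pushf_id HE) -hr (pushf_comp HE) (push_infl_zero hd) pushf0E.
Qed.

Lemma pullback (A1 B1 A2 B2 Z : Obj C) (d1 : Ext E Z A1) (x1 : Hom A1 B1) (y1 : Hom B1 Z)
  (d2 : Ext E Z A2) (x2 : Hom A2 B2) (y2 : Hom B2 Z) :
  real d1 x1 y1 -> real d2 x2 y2 ->
  exists N (e1 : Ext E B1 A2) (u1 : Hom A2 N) (v1 : Hom N B1)
    (e2 : Ext E B2 A1) (u2 : Hom A1 N) (v2 : Hom N B2),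
    real e1 u1 v1 /\ real e2 u2 v2.
Proof.
move=> hd1 hd2.
have [S [i1 [i2 [p1 [p2 hb]]]]] := biprod_exists HC A1 A2.
have [N [u [v hth]]] := real_exists HE (i1 |_* d1 + i2 |_* d2).
case: (hb) => b1 b2 b3 b4 b5.
have [G [h' [d'' [dd [e [hr1 hr2 _ _ _]]]]]] := et4 HE (real_zero HE (biprod_sym hb)) hth.
have [G' [h2' [d2'' [dd2 [e2 [hr1' hr2' _ _ _]]]]]] := et4 HE (real_zero HE hb) hth.
rewrite (pushf_addE HE) -!(pushf_comp HE) b1 b3 (pushf_id HE) pushf0H addr0 in hr2.
rewrite (pushf_addE HE) -!(pushf_comp HE) b2 b4 (pushf_id HE) pushf0H add0r in hr2'.
have [phi [[psi [hp1 hp2]] _ _]] := real_unique HE hr2 hd1.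
have [phi2 [[psi2 [hq1 hq2]] _ _]] := real_unique HE hr2' hd2.
exists N, (psi |^* d''), (u \oc i2), (phi \oc h'), (psi2 |^* d2''), (u \oc i1), (phi2 \oc h2').
split; by apply: iso3.
Qed.

Lemma pushout (A B1 C1 B2 C2 : Obj C) (d1 : Ext E C1 A) (x1 : Hom A B1) (y1 : Hom B1 C1)
  (d2 : Ext E C2 A) (x2 : Hom A B2) (y2 : Hom B2 C2) :
  real d1 x1 y1 -> real d2 x2 y2 ->
  exists N (e1 : Ext E C2 B1) (u1 : Hom B1 N) (v1 : Hom N C2)
    (e2 : Ext E C1 B2) (u2 : Hom B2 N) (v2 : Hom N C1),
    real e1 u1 v1 /\ real e2 u2 v2.
Proof.
move=> hd1 hd2.
have [S [i1 [i2 [p1 [p2 hb]]]]] := biprod_exists HC C1 C2.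
have [N [u [v hth]]] := real_exists HE (p1 |^* d1 + p2 |^* d2).
case: (hb) => b1 b2 b3 b4 b5.
have [G [dd [e [h' [d'' [hr1 hr2 _ _ _]]]]]] := et4op HE hth (real_zero HE (biprod_sym hb)).
have [G' [dd2 [e2 [h2' [d2'' [hr1' hr2' _ _ _]]]]]] := et4op HE hth (real_zero HE hb).
rewrite (pullb_addE HE) -!(pullb_comp HE) b2 b3 (pullb_id HE) pullb0H add0r in hr2.
rewrite (pullb_addE HE) -!(pullb_comp HE) b1 b4 (pullb_id HE) pullb0H addr0 in hr2'.
have [phi [[psi [hp1 hp2]] _ _]] := real_unique HE hr2 hd2.
have [phi2 [[psi2 [hq1 hq2]] _ _]] := real_unique HE hr2' hd1.
exists N, (phi2 |_* d2''), (h2' \oc psi2), (p2 \oc v), (phi |_* d''), (h' \oc psi), (p1 \oc v).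
split; by apply: iso1.
Qed.


Lemma inj_ext (I R J : Obj C) (d : Ext E J I) (x : Hom I R) (y : Hom R J) :
  real d x y -> Defs.injective E I -> Defs.injective E J -> Defs.injective E R.
Proof.
move=> hd hI hJ.
have d0 := inj_split hd hI; subst d.
have [r [s [b1 b2 b3 b4 b5]]] := split_biprod hd.
move=> A B Z d0 a b hd0 f.
have [g1 hg1] := hI _ _ _ _ _ _ hd0 (r \oc f).
have [g2 hg2] := hJ _ _ _ _ _ _ hd0 (y \oc f).
exists (x \oc g1 + s \oc g2).
rewrite (comp_addl HC) -!(comp_assoc HC) hg1 hg2 !(comp_assoc HC) -(comp_addl HC) b5.
exact: (comp_idl HC).
Qed.

Lemma cosyz0_inv (j : nat) (M Z : Obj C) : cosyz E j M Z -> j = 0%N -> Z = M.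
Proof. by case=> //. Qed.

Lemma cosyzS_inv (j : nat) (M Z : Obj C) : cosyz E j.+1 M Z ->
  exists Z0 I (d : Ext E Z Z0) (x : Hom Z0 I) (y : Hom I Z),
    [/\ cosyz E j M Z0, real d x y & Defs.injective E I].
Proof.
move=> h; inversion h; subst.
by exists Z0, I, d, x, y.
Qed.

Lemma cosyz_cons (j : nat) (K1 Z : Obj C) : cosyz E j K1 Z ->
  forall K I (d : Ext E K1 K) (x : Hom K I) (y : Hom I K1),
  real d x y -> Defs.injective E I -> cosyz E j.+1 K Z.
Proof.
elim=> [Y|n Y Z0 I' Z' d' x' y' _ IH hr hI'] K I d x y hd hI.
- exact: (cosyzS (cosyz0 E K) hd hI).
- exact: (cosyzS (IH _ _ _ _ _ hd hI) hr hI').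
Qed.

Lemma cosyz_decomp (j : nat) : forall (M Z : Obj C), cosyz E j.+1 M Z ->
  exists M1 I (d : Ext E M1 M) (m : Hom M I) (p : Hom I M1),
    [/\ real d m p, Defs.injective E I & cosyz E j M1 Z].
Proof.
elim: j => [|j IH] M Z h.
- have [Z0 [I [d [x [y [h0 hr hI]]]]]] := cosyzS_inv h.
  have e := cosyz0_inv h0 erefl; subst Z0.
  by exists Z, I, d, x, y; split => //; apply: cosyz0.
- have [Z0 [I [d [x [y [h0 hr hI]]]]]] := cosyzS_inv h.
  have [M1 [I1 [d1 [m [p [h1 h2 h3]]]]]] := IH _ _ h0.
  exists M1, I1, d1, m, p; split => //.
  exact: (cosyzS h3 hr hI).
Qed.


Variable X : Obj C -> Prop.
Definition Vz (Z : Obj C) := forall X0, X X0 -> forall d : Ext E X0 Z, d = 0.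

Lemma les1 (K G M K' J : Obj C) (d1 : Ext E M K) (x : Hom K G) (y : Hom G M)
  (dK : Ext E K' K) (k : Hom K J) (q : Hom J K') (c : Hom M K') :
  real d1 x y -> real dK k q -> d1 = c |^* dK -> Vz G -> Vz K' -> Vz M.
Proof.
move=> hd1 hdK hc hG hK' X0 hX0 dl.
have [Y [m [g hdl]]] := real_exists HE dl.
have hc0 : c |_* dl = 0 := hK' X0 hX0 _.
have [S [i1 [i2 [p1 [p2 hb]]]]] := biprod_exists HC K' X0.
have h0 := real_zero HE hb.
have hrel : c |_* dl = idm |^* 0 by rewrite hc0 pullb0E.
have [b [hbm _]] := real_morph HE hdl h0 hrel.
case: (hb) => b1 b2 b3 b4 b5.
have hct : (p1 \oc b) \oc m = c by rewrite -(comp_assoc HC) hbm (comp_assoc HC) b1 (comp_idl HC).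
have [G' [f' [f he]]] := real_exists HE ((p1 \oc b) |^* dK).
have hde : m |^* ((p1 \oc b) |^* dK) = d1 by rewrite -(pullb_comp HE) hct.
have [G0 [dd [e0 [h' [d'' [_ hr2 hr3 _ _]]]]]] := et4op HE he hdl.
rewrite hde in hr2.
have [phi [_ _ hphi]] := real_unique HE hr2 hd1.
by rewrite hr3 -hphi (pushf_comp HE) (hG X0 hX0 (phi |_* d'')) pushf0E.
Qed.


Variable HI : enough_injectives E.

Lemma horseshoe (K G M I M1 : Obj C) (d1 : Ext E M K) (x : Hom K G) (y : Hom G M)
  (dM : Ext E M1 M) (m : Hom M I) (p : Hom I M1) :
  real d1 x y -> real dM m p -> Defs.injective E I ->
  exists K1 G1, [/\ cosyz E 1 K K1, cosyz E 1 G G1 &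
    exists (d : Ext E M1 K1) (u : Hom K1 G1) (v : Hom G1 M1), real d u v].
Proof.
move=> hd1 hdM hI.
have [JG [SG [dG [g [h [hdG hJ]]]]]] := HI G.
have [Q [h' [d'' [dd [e [hr1 hr2 _ _ _]]]]]] := et4 HE hd1 hdG.
have [N [e1 [u1 [v1 [e2 [u2 [v2 [hn1 hn2]]]]]]]] := pushout hr2 hdM.
have [R [f1 [a1 [b1 [f2 [a2 [b2 [hq1 hq2]]]]]]]] := pullback hdG hn2.
have hR := inj_ext hq1 hI hJ.
exists Q, N; split.
- exact: (cosyzS (cosyz0 E K) hr1 hJ).
- exact: (cosyzS (cosyz0 E G) hq2 hR).
- by exists e1, u1, v1.
Qed.

Definition Uz (M : Obj C) := forall j Z, cosyz E j M Z -> Vz Z.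

Lemma Ucone (j : nat) : forall (K G M : Obj C) (d1 : Ext E M K) (x : Hom K G) (y : Hom G M),
  real d1 x y -> Uz K -> Uz G -> forall Z, cosyz E j M Z -> Vz Z.
Proof.
elim: j => [|j IH] K G M d1 x y hd1 hK hG Z hZ.
- have e := cosyz0_inv hZ erefl; subst Z.
  have [J [K' [dK [k [q [hdK hJ]]]]]] := HI K.
  have [g hg] := hJ _ _ _ _ _ _ hd1 k.
  have hc : q \oc g = q \oc g by [].
  have [c [hc1 _]] := et3 HE (a := idm) (b := g) hd1 hdK (etrans hg (esym (comp_idr HC k))).
  rewrite (pushf_id HE) in hc1.
  apply: (les1 hd1 hdK hc1 (hG 0%N G (cosyz0 E G))).
  exact: (hK 1%N K' (cosyzS (cosyz0 E K) hdK hJ)).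
- have [M1 [I [dM [m [p [hdM hI hZ1]]]]]] := cosyz_decomp hZ.
  have [K1 [G1 [hK1 hG1 [d [u [v hd]]]]]] := horseshoe hd1 hdM hI.
  apply: (IH _ _ _ _ _ _ hd) => //.
  + move=> j' Z' hz'.
    have [Z0 [I0 [d0 [x0 [y0 [h0 hr hI0]]]]]] := cosyzS_inv hK1.
    have e := cosyz0_inv h0 erefl; subst Z0.
    exact: (hK _ _ (cosyz_cons hz' hr hI0)).
  + move=> j' Z' hz'.
    have [Z0 [I0 [d0 [x0 [y0 [h0 hr hI0]]]]]] := cosyzS_inv hG1.
    have e := cosyz0_inv h0 erefl; subst Z0.
    exact: (hG _ _ (cosyz_cons hz' hr hI0)).
Qed.


Variable W : Obj C -> Prop.
Variable hWX : forall A, W A -> X A.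
Variable hWz : forall Z, is_zero_obj Z -> W Z.
Variable hcog : forall X0, X X0 -> exists W0 X' (d : Ext E X' X0) (x : Hom X0 W0) (y : Hom W0 X'),
           [/\ real d x y, W W0 & X X'].
Variable hvan : forall X0 W0 i, X X0 -> W W0 -> (1 <= i)%N -> higher_ext_vanish E i X0 W0.
Variable HXext : extension_closed E X.
Variable HXcoc : cocone_closed E X.

Lemma UW (W0 : Obj C) : W W0 -> Uz W0.
Proof. by move=> hW j Z hz X0 hX0 d; have h := hvan (i := j.+1) hX0 hW erefl; exact: h Z hz d. Qed.

Lemma T1 (n : nat) (M : Obj C) : XhatN E W n M -> Uz M.
Proof.
elim=> [A hA|k K X0 Z d x y hr hX0 hK IH]; first exact: UW.
move=> j Z' hz; exact: (Ucone hr IH (UW hX0) hz).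
Qed.

Lemma vanish (n : nat) (K X0 : Obj C) (d : Ext E X0 K) : XhatN E W n K -> X X0 -> d = 0.
Proof. by move=> hK hX0; apply: (T1 hK (cosyz0 E K) hX0). Qed.

Lemma L_WX (n : nat) (K : Obj C) : XhatN E W n K -> XhatN E X n K.
Proof.
elim=> [A hA|k K0 X0 Z d x y hr hX0 hK IH]; first by apply: XhatN0; apply: hWX.
exact: (XhatNS hr (hWX hX0) IH).
Qed.

Lemma T2 (n : nat) (Cc : Obj C) : XhatN E X n Cc ->
  exists K XC (d : Ext E Cc K) (x : Hom K XC) (y : Hom XC Cc),
    [/\ real d x y, X XC & exists m, XhatN E W m K].
Proof.
elim=> [A hA|k K X0 Z d x y hr hX0 hK IH].
- have [Z0 hz] := zero_exists HC.
  exists Z0, A, 0, 0, idm; split => //; first exact: triv_tri2.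
  by exists 0%N; apply: XhatN0; apply: hWz.
- have [KK [XK [dk [xk [yk [hk hXK [m hKK]]]]]]] := IH.
  have [WK [X'K [dw [xw [yw [hw hWK hX'K]]]]]] := hcog hXK.
  have [G [h' [d'' [dd [e [hr1 hr2 _ _ _]]]]]] := et4 HE hk hw.
  have [N [e1 [u1 [v1 [e2 [u2 [v2 [hn1 hn2]]]]]]]] := pushout hr hr2.
  exists G, N, e2, u2, v2; split => //.
  + exact: (HXext hn1 hX0 hX'K).
  + by exists m.+1; apply: (XhatNS hr1 hWK hKK).
Qed.

Lemma T2' (n : nat) (Cc : Obj C) : XhatN E X n Cc ->
  exists WC XC (d : Ext E XC Cc) (x : Hom Cc WC) (y : Hom WC XC),
    [/\ real d x y, X XC & exists m, XhatN E W m WC].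
Proof.
move=> hC.
have [K [XC [dk [xk [yk [hk hXC [m hK]]]]]]] := T2 hC.
have [W1 [X1 [dw [xw [yw [hw hW1 hX1]]]]]] := hcog hXC.
have [G [h' [d'' [dd [e [hr1 hr2 _ _ _]]]]]] := et4 HE hk hw.
exists G, X1, (yk |_* dw), dd, e; split => //.
by exists m.+1; apply: (XhatNS hr1 hW1 hK).
Qed.

Lemma T3 (n : nat) (B' : Obj C) : XhatN E X n B' ->
  forall B X1 (d : Ext E X1 B) (a : Hom B B') (b : Hom B' X1),
  real d a b -> X X1 -> XhatN E X n B.
Proof.
case=> [A hA|k K X0 Z d x y hr hX0 hK] B X1 d0 a b hd0 hX1.
- by apply: XhatN0; apply: (HXcoc hd0 hA hX1).
- have [G [dd [e [h' [d'' [hr1 hr2 _ _ _]]]]]] := et4op HE hr hd0.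
  exact: (XhatNS hr2 (HXcoc hr1 hX0 hX1) hK).
Qed.

Lemma LemE (m : nat) (K : Obj C) : XhatN E W m K ->
  forall Q A (d : Ext E A K) (a : Hom K Q) (b : Hom Q A),
  real d a b -> Xhat E X A -> Xhat E X Q.
Proof.
move=> hKall; elim: hKall => [K0 hK0|k L W0 K0 dL xL yL hrL hW0 hL IH] Q A d a b hd [nA hA];
  have [KA [XA [dA [xA [yA [hdA hXA [mA hKA]]]]]]] := T2 hA;
  have [P [e1 [u1 [v1 [e2 [u2 [v2 [he1 he2]]]]]]]] := pullback hd hdA.
- have hXP : X P := HXext he2 (hWX hK0) hXA.
  by exists mA.+1; apply: (XhatNS he1 hXP (L_WX hKA)).
- have he20 : e2 = 0 := vanish e2 (XhatNS hrL hW0 hL) hXA.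
  subst e2.
  have [r [s hbp]] := split_biprod he2.
  have hsw := real_zero HE (biprod_sym hbp).
  have [N [f1 [a1 [b1 [f2 [a2 [b2 [hf1 hf2]]]]]]]] := pullback hsw hrL.
  have hXN : X N := HXext hf2 hXA (hWX hW0).
  have [G [dd [e [h' [d'' [hr1 hr2 _ _ _]]]]]] := et4op HE hf1 he1.
  have [kG hG] := IH _ _ _ _ _ hr2 (ex_intro _ mA (L_WX hKA)).
  by exists kG.+1; apply: (XhatNS hr1 hXN hG).
Qed.

Lemma LemF (Q X0 Cc : Obj C) (d : Ext E Cc Q) (a : Hom Q X0) (b : Hom X0 Cc) :
  real d a b -> X X0 -> Xhat E X Cc -> Xhat E X Q.
Proof.
move=> hd hX0 [nC hC].
have [KC [XC [dC [xC [yC [hdC hXC [mC hKC]]]]]]] := T2 hC.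
have [R [e1 [u1 [v1 [e2 [u2 [v2 [he1 he2]]]]]]]] := pullback hd hdC.
have [nR hR] := LemE hKC he1 (ex_intro _ 0%N (XhatN0 E hX0)).
by exists nR; apply: (T3 hR he2 hXC).
Qed.

Lemma P1 (A B Cc : Obj C) (d : Ext E Cc A) (x : Hom A B) (y : Hom B Cc) :
  real d x y -> Xhat E X A -> Xhat E X B -> Xhat E X Cc.
Proof.
move=> hd hA [nB hB].
have [KB [XB [dB [xB [yB [hdB hXB [mB hKB]]]]]]] := T2 hB.
have [G [dd [e [h' [d'' [hr1 hr2 _ _ _]]]]]] := et4op HE hdB hd.
have [k hG] := LemE hKB hr2 hA.
by exists k.+1; apply: (XhatNS hr1 hXB hG).
Qed.

Lemma P2 (A B Cc : Obj C) (d : Ext E Cc A) (x : Hom A B) (y : Hom B Cc) :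
  real d x y -> Xhat E X A -> Xhat E X Cc -> Xhat E X B.
Proof.
move=> hd [nA hA] hC.
have [WA [XA [dw [xw [yw [hw hXA [mA hWA]]]]]]] := T2' hA.
have [N [e1 [u1 [v1 [e2 [u2 [v2 [he1 he2]]]]]]]] := pushout hd hw.
have [k hN] := LemE hWA he2 hC.
by exists k; apply: (T3 hN he1 hXA).
Qed.

Lemma P3 (A B Cc : Obj C) (d : Ext E Cc A) (x : Hom A B) (y : Hom B Cc) :
  real d x y -> Xhat E X B -> Xhat E X Cc -> Xhat E X A.
Proof.
move=> hd [nB hB] hC.
have [KB [XB [dB [xB [yB [hdB hXB [mB hKB]]]]]]] := T2 hB.
have [G [dd [e [h' [d'' [hr1 hr2 _ _ _]]]]]] := et4op HE hdB hd.
have hG := LemF hr1 hXB hC.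
exact: (P1 hr2 (ex_intro _ mB (L_WX hKB)) hG).
Qed.

End Basics.

Theorem proposition3p15 (C : CatData) (E : ExtData C)
  (HC : IsAdditive C) (HE : IsExtriangulated E)
  (HP : enough_projectives E) (HI : enough_injectives E)
  (X W : Obj C -> Prop) (HXs : is_subcat X) (HWs : is_subcat W)
  (HXext : extension_closed E X) (HXcoc : cocone_closed E X)
  (HW : inj_cogenerator E X W)
  (A B Z : Obj C) (d : Ext E Z A) (x : Hom A B) (y : Hom B Z)
  (Hd : real d x y) :
  [/\ (Xhat E X A -> Xhat E X B -> Xhat E X Z),
      (Xhat E X A -> Xhat E X Z -> Xhat E X B)
    & (Xhat E X B -> Xhat E X Z -> Xhat E X A)].
Proof.
case: HW => hWX hcog hvan.
case: HWs => hWz _ _ _.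
split.
- exact: (P1 HC HE HI hWX hWz hcog hvan HXext Hd).
- exact: (P2 HC HE HI hWX hWz hcog hvan HXext HXcoc Hd).
- exact: (P3 HC HE HI hWX hWz hcog hvan HXext HXcoc Hd).
Qed.
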